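(* Let $n\geq 2$ and let $L_n$ be the graph of linear $[n]$-phenylene (defined in the context). Then the base polynomial counting distances between pairs of degree-2 vertices of $L_n$ is \begin{eqnarray*} H^{2,2}_{b}(L_{n}) &=& 6x+(3n-2)x^{3}+2\sum_{k=2}^{n}(n-k+3)x^{3k-2}+4\sum_{k=1}^{n-1}x^{3k-1}\\ &&+6x^{3n-1}+2\sum_{k=2}^{n}(n-k)x^{3k}+2x^{3n}. \end{eqnarray*}
   Context: All graphs are finite, simple and connected; $d(u,v)$ denotes the shortest-path distance and $d_u$ the degree of a vertex $u$. For a graph $G$ and degrees $p\le q$, the base polynomial is $H^{p,q}_{b}(G)=\sum x^{d(u,v)}$, where the sum runs over all unordered pairs $\{u,v\}$ of distinct vertices of $G$ such that one of $u,v$ has degree $p$ and the other has degree $q$ (for $p=q$: both have degree $p$). Linear $[n]$-phenylene $L_n$: take $n$ hexagons $H_1,\dots,H_n$; hexagon $H_i$ is the 6-cycle $a_i b_i c_i d_i e_i f_i a_i$. For each $i=1,\dots,n-1$ add the two edges $b_i f_{i+1}$ and $c_i e_{i+1}$, so that $b_i c_i e_{i+1} f_{i+1}$ is a 4-cycle joining consecutive hexagons. Thus $L_n$ has $6n$ vertices, $n$ hexagons and $n-1$ squares, $2n+4$ vertices of degree 2 and $4n-4$ vertices of degree 3. *)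

(* Defs.v *)
From mathcomp Require Import all_boot all_order all_algebra.
Set Implicit Arguments. Unset Strict Implicit. Unset Printing Implicit Defensive.
Import GRing.Theory.
Local Open Scope ring_scope.

Definition gdeg (T : finType) (e : rel T) (u : T) : nat := #|[set v | e u v]|.

Fixpoint within (T : finType) (e : rel T) (k : nat) (u v : T) : bool :=
  match k with
  | 0 => u == v
  | k'.+1 => within e k' u v || [exists w, within e k' u w && e w v]
  end.

(* shortest-path distance: the least k with a walk of length <= k from u to v
   (for a connected graph on #|T| vertices, such k < #|T| always exists) *)
Definition gdist (T : finType) (e : rel T) (u v : T) : nat :=
  find (fun k => within e k u v) (iota 0 #|T|).

Definition Hb (N : nat) (e : rel 'I_N) (p q : nat) : {poly int} :=
  \sum_(u : 'I_N) \sum_(v : 'I_N | (u < v)%N &&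
      (((gdeg e u == p) && (gdeg e v == q)) || ((gdeg e u == q) && (gdeg e v == p))))
     'X^(gdist e u v).

(* Linear [n]-phenylene L_n on vertex set 'I_(6*n): vertex m is the vertex of
   hexagon H_(m %/ 6) at position m %% 6, positions 0..5 standing for
   a,b,c,d,e,f.  Edges: the hexagon cycles a b c d e f a, plus
   b_i f_(i+1) and c_i e_(i+1). *)
Definition phen_adj (u v : nat) : bool :=
  (let i := u %/ 6 in let a := u %% 6 in
  let j := v %/ 6 in let b := v %% 6 in
  [|| (i == j) && ((a.+1 %% 6 == b) || (b.+1 %% 6 == a)),
      (j == i.+1) && (((a == 1) && (b == 5)) || ((a == 2) && (b == 4)))
    | (i == j.+1) && (((b == 1) && (a == 5)) || ((b == 2) && (a == 4)))])%N.

Arguments phen_adj : clear implicits.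
Definition phenylene (n : nat) : rel 'I_(6 * n) :=
  fun u v => phen_adj (nat_of_ord u) (nat_of_ord v).
Arguments phenylene : clear implicits.

(* Main.v *)
Require Import Defs.
From mathcomp Require Import all_boot all_order all_algebra.
From mathcomp Require Import zify ring.
Import GRing.Theory.

Definition col (a : nat) : nat :=
  match a with 0 => 1 | 1 => 2 | 2 => 2 | 3 => 1 | _ => 0 end.
Definition row (a : nat) : bool := (a == 2) || (a == 3) || (a == 4).
Definition xc (u : nat) : nat := 3 * (u %/ 6) + col (u %% 6).
Definition yc (u : nat) : bool := row (u %% 6).
Definition absd (a b : nat) : nat := (a - b) + (b - a).
Definition Dc (xr : nat) (yr : bool) (xp : nat) (yp : bool) : nat :=
  absd xr xp + (if yr != yp then (if (xr == xp) && (xr %% 3 == 1) then 3 else 1) else 0).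
Definition D (u v : nat) : nat := Dc (xc u) (yc u) (xc v) (yc v).
Definition cadjc (xp : nat) (yp : bool) (xq : nat) (yq : bool) : bool :=
  ((yp == yq) && (absd xp xq == 1)) || ((xp == xq) && (xp %% 3 != 1) && (yp != yq)).

Lemma xc6 i a : a < 6 -> xc (6 * i + a) = 3 * i + col a.
Proof.
move=> ha; rewrite /xc.
have -> : (6 * i + a) %/ 6 = i by lia.
have -> : (6 * i + a) %% 6 = a by lia.
by [].
Qed.
Lemma yc6 i a : a < 6 -> yc (6 * i + a) = row a.
Proof. move=> ha; rewrite /yc. have -> : (6 * i + a) %% 6 = a by lia. by []. Qed.

Lemma decomp u : exists i a, a < 6 /\ u = 6 * i + a.
Proof. exists (u %/ 6), (u %% 6); lia. Qed.

Lemma adjC u v : phen_adj u v = cadjc (xc u) (yc u) (xc v) (yc v).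
Proof.
have [i [a [ha ->]]] := decomp u; have [j [b [hb ->]]] := decomp v.
rewrite !xc6 // !yc6 // /phen_adj /cadjc /absd.
have -> : (6 * i + a) %/ 6 = i by lia.
have -> : (6 * i + a) %% 6 = a by lia.
have -> : (6 * j + b) %/ 6 = j by lia.
have -> : (6 * j + b) %% 6 = b by lia.
move: a b ha hb => [|[|[|[|[|[|a]]]]]] [|[|[|[|[|[|b]]]]]] //= _ _; lia.
Qed.

Lemma lipc xr yr xp yp xq yq : cadjc xp yp xq yq -> Dc xr yr xq yq <= Dc xr yr xp yp + 1.
Proof.
rewrite /cadjc /Dc /absd.
move: yr yp yq => [] [] [] /=; do ? case: ifP; lia.
Qed.

Lemma descc n xr yr xq yq : xr < 3 * n -> xq < 3 * n -> 0 < Dc xr yr xq yq ->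
  exists xp yp, [/\ xp < 3 * n, cadjc xp yp xq yq & Dc xr yr xp yp = (Dc xr yr xq yq).-1].
Proof.
move=> hr hq hD.
case: (boolP (yr == yq)) => hy.
- case: (ltngtP xr xq) => hx.
  + exists xq.-1, yq; rewrite /cadjc /Dc /absd in hD *; rewrite (eqP hy) eqxx /= in hD *; split; lia.
  + exists xq.+1, yq; rewrite /cadjc /Dc /absd in hD *; rewrite (eqP hy) eqxx /= in hD *; split; lia.
  + rewrite /Dc /absd (eqP hy) eqxx hx /= in hD; lia.
- case: (boolP (xq %% 3 == 1)) => h3.
  + case: (ltngtP xr xq) => hx.
    * exists xq.-1, yq; rewrite /cadjc /Dc /absd in hD *; rewrite hy eqxx /= in hD *.
      do ? case: ifP; split; lia.
    * exists xq.+1, yq; rewrite /cadjc /Dc /absd in hD *; rewrite hy eqxx /= in hD *.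
      do ? case: ifP; split; lia.
    * exists xq.+1, yq; rewrite /cadjc /Dc /absd in hD *; rewrite hy eqxx /= in hD *.
      do ? case: ifP; split; lia.
  + exists xq, yr; rewrite /cadjc /Dc /absd in hD *; move: yr yq hy hD => [] [] //= _.
    all: do ? case: ifP; split; lia.
Qed.

Definition tab (r : nat) (y : bool) : nat :=
  match r, y with 0, false => 5 | 1, false => 0 | 2, false => 1
  | 0, true => 4 | 1, true => 3 | _, _ => 2 end.
Definition vert (x : nat) (y : bool) : nat := 6 * (x %/ 3) + tab (x %% 3) y.

Lemma vert_prop x y : xc (vert x y) = x /\ yc (vert x y) = y.
Proof.
rewrite /vert.
have : x %% 3 < 3 by lia.
have : x = 3 * (x %/ 3) + x %% 3 by lia.
move: (x %/ 3) (x %% 3) => q [|[|[|r]]] hx // _; move: y => [] ;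
  rewrite /= ?xc6 ?yc6 //=; lia.
Qed.
Lemma xc_vert x y : xc (vert x y) = x. Proof. by case: (vert_prop x y). Qed.
Lemma yc_vert x y : yc (vert x y) = y. Proof. by case: (vert_prop x y). Qed.
Lemma vert3 i c y : c < 3 -> vert (3 * i + c) y = 6 * i + tab c y.
Proof.
move=> hc; rewrite /vert.
have -> : (3 * i + c) %/ 3 = i by lia.
have -> : (3 * i + c) %% 3 = c by lia.
by [].
Qed.
Lemma vert_xc u : vert (xc u) (yc u) = u.
Proof.
have [i [a [ha ->]]] := decomp u; rewrite xc6 // yc6 //.
move: a ha => [|[|[|[|[|[|a]]]]]] //= _; rewrite ?vert3 //.

Qed.
Lemma vert_eq v x y : (v == vert x y) = (xc v == x) && (yc v == y).
Proof.
apply/eqP/andP => [->|[/eqP <- /eqP <-]]; last by rewrite vert_xc.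
by rewrite xc_vert yc_vert.
Qed.
Lemma xc_lt n u : u < 6 * n -> xc u < 3 * n.
Proof. have [i [a [ha ->]]] := decomp u; rewrite xc6 //; move: a ha => [|[|[|[|[|[|a]]]]]] //= _; lia. Qed.
Lemma vert_lt n x y : x < 3 * n -> vert x y < 6 * n.
Proof.
rewrite /vert. have : x %% 3 < 3 by lia.
have : x = 3 * (x %/ 3) + x %% 3 by lia.
move: (x %/ 3) (x %% 3) => q [|[|[|r]]] hx // _; move: y => [] /=; lia.
Qed.

Lemma Duu u : D u u = 0.
Proof. by rewrite /D /Dc /absd subnn eqxx. Qed.

Lemma D0 u v : D u v = 0 -> u = v.
Proof.
rewrite /D /Dc /absd => h.
have hx : xc u = xc v by move: h; case: ifP => _; [case: ifP => _|]; lia.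
have hy : yc u = yc v by move: h; case: (yc u =P yc v) => // _ /=; case: ifP => _; lia.
by rewrite -(vert_xc u) hx hy vert_xc.
Qed.

Lemma within_le n k (u v : 'I_(6 * n)) : within (phenylene n) k u v -> D u v <= k.
Proof.
elim: k v => [|k IH] v /=.
- by move/eqP ->; rewrite Duu.
- case/orP => [/IH|/existsP [w /andP [/IH h1 h2]]]; first lia.
  have := lipc (xc u) (yc u) (xc w) (yc w) (xc v) (yc v).
  rewrite -adjC => /(_ h2); rewrite /D in h1 *; lia.
Qed.

Lemma within_D n (u : 'I_(6 * n)) d : forall v : 'I_(6 * n), D u v = d -> within (phenylene n) d u v.
Proof.
elim: d => [|d IH] v hd /=.
- by apply/eqP/val_inj; apply: D0.
- apply/orP; right.
  have [xp [yp [h1 h2 h3]]] := descc n (xc u) (yc u) (xc v) (yc v)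
    (@xc_lt n u (ltn_ord u)) (@xc_lt n v (ltn_ord v)) (ltac:(rewrite /D in hd; lia)).
  apply/existsP; exists (Ordinal (@vert_lt n xp yp h1)).
  rewrite IH /=; last by rewrite /D xc_vert yc_vert h3 -/(D u v) hd.
  by rewrite /phenylene /= adjC xc_vert yc_vert.
Qed.

Lemma find_iota (P : pred nat) d N m : m <= d -> d < m + N -> P d ->
  (forall k, k < d -> ~~ P k) -> find P (iota m N) = d - m.
Proof.
elim: N m => [|N IH] m h1 h2 hP hk; first lia.
rewrite /= ; case: (ltngtP m d) => hmd.
- rewrite (negbTE (hk m hmd)) IH //; lia.
- lia.
- by rewrite hmd hP subnn.
Qed.

Lemma D_le n u v : 0 < n -> u < 6 * n -> v < 6 * n -> D u v < 6 * n.
Proof.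
move=> hn hu hv; have := @xc_lt n u hu; have := @xc_lt n v hv.
rewrite /D /Dc /absd; do ? case: ifP; lia.
Qed.

Lemma gdistD n (u v : 'I_(6 * n)) : gdist (phenylene n) u v = D u v.
Proof.
have hn : 0 < n by move: (ltn_ord u); lia.
rewrite /gdist card_ord (@find_iota _ (D u v)) ?subn0 //.
- by rewrite add0n D_le.
- exact: within_D.
- move=> k hk; apply/negP => /within_le; lia.
Qed.

Lemma sum_pred1 (w N : nat) (c : bool) :
  \sum_(0 <= v < N) (((v == w) && c) : nat) = ((w < N) && c).
Proof.
case: c; last by rewrite andbF big1 // => i _; rewrite andbF.
elim: N => [|N IH]; first by rewrite big_geq.
rewrite big_nat_recr //= IH.
rewrite !andbT; case: (ltngtP w N) => h; rewrite /=.
- by rewrite ltnS ltnW.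
- by rewrite ltnS leqNgt h.
- by rewrite h ltnSn.
Qed.

Lemma ptw x y xv yv :
  ((if cadjc x y xv yv then 1 else 0) =
  (((xv == x.-1) && (yv == y)) && (0 < x)) + ((xv == x.+1) && (yv == y)) +
  (((xv == x) && (yv == ~~ y)) && (x %% 3 != 1)))%N.
Proof.
case: (posnP x) => hx0; first (rewrite hx0 /=).
all: move: y yv => [] [] /=; rewrite /cadjc /absd /=; do ? case: eqP => ? /=; try lia.
Qed.

Lemma gdeg_eq n (u : 'I_(6 * n)) : gdeg (phenylene n) u =
  (((0 < xc u) : nat) + (((xc u).+1 < 3 * n) : nat) + ((xc u %% 3 != 1) : nat))%N.
Proof.
have hx := @xc_lt n u (ltn_ord u).
rewrite /gdeg -sum1_card big_mkcond /=.
pose G (v : nat) := ((((v == vert (xc u).-1 (yc u)) && (0 < xc u)) : nat) + ((v == vert (xc u).+1 (yc u)) && true)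
   + ((v == vert (xc u) (~~ yc u)) && (xc u %% 3 != 1)))%N.
rewrite (eq_bigr (fun v : 'I_(6 * n) => G v)); last first.
  move=> v _; rewrite inE /phenylene adjC /G !vert_eq andbT; exact: (ptw (xc u) (yc u) (xc v) (yc v)).
rewrite -(big_mkord xpredT G) /G.
rewrite !big_split /= !sum_pred1 andbT.
have -> : vert (xc u) (~~ yc u) < 6 * n by apply: vert_lt.
have -> : (vert (xc u).+1 (yc u) < 6 * n) = ((xc u).+1 < 3 * n).
  apply/idP/idP => h.
  - have := xc_vert (xc u).+1 (yc u); have := @xc_lt n _ h; lia.
  - by apply: vert_lt.
case: (posnP (xc u)) => h0; first by rewrite h0 andbF.
have -> : vert (xc u).-1 (yc u) < 6 * n by apply: vert_lt; lia.
by [].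
Qed.

Definition Sdeg n u := (xc u == 0) || (xc u == (3 * n).-1) || (xc u %% 3 == 1).

Lemma deg2 n (u : 'I_(6 * n)) : (gdeg (phenylene n) u == 2) = Sdeg n u.
Proof.
have hx := @xc_lt n u (ltn_ord u).
rewrite gdeg_eq /Sdeg.
case: (posnP (xc u)) => h0; first by rewrite h0 /=; lia.
case: (xc u %% 3 =P 1) => h3 /=; lia.
Qed.

Lemma xcA i : xc (6 * i) = 3 * i + 1.
Proof. by rewrite -(addn0 (6 * i)) xc6. Qed.
Lemma ycA i : yc (6 * i) = false.
Proof. by rewrite -(addn0 (6 * i)) yc6. Qed.
Lemma xc4 : xc 4 = 0. Proof. by []. Qed.
Lemma xc5 : xc 5 = 0. Proof. by []. Qed.
Lemma yc4 : yc 4 = true. Proof. by []. Qed.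
Lemma yc5 : yc 5 = false. Proof. by []. Qed.

Ltac dtac := rewrite /D /Dc ?xcA ?ycA ?xc6 ?yc6 ?xc4 ?yc4 ?xc5 ?yc5 //= /absd; do ? case: ifP => ?; lia.

Lemma DAA (i j : nat) : D (6 * i) (6 * j) = 3 * absd i j.
Proof. move=> *; dtac. Qed.
Lemma DAB (i j : nat) : D (6 * i) (6 * j+3) = 3 * absd i j + (if i == j then 3 else 1).
Proof. move=> *; dtac. Qed.
Lemma DA4 (i : nat) : D (6 * i) 4 = 3 * i+2.
Proof. move=> *; dtac. Qed.
Lemma DA5 (i : nat) : D (6 * i) 5 = 3 * i+1.
Proof. move=> *; dtac. Qed.
Lemma DAb (i m : nat) : i <= m -> D (6 * i) (6 * m+1) = 3 * (m-i)+1.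
Proof. move=> *; dtac. Qed.
Lemma DAc (i m : nat) : i <= m -> D (6 * i) (6 * m+2) = 3 * (m-i)+2.
Proof. move=> *; dtac. Qed.
Lemma DBA (i j : nat) : D (6 * i+3) (6 * j) = 3 * absd i j + (if i == j then 3 else 1).
Proof. move=> *; dtac. Qed.
Lemma DBB (i j : nat) : D (6 * i+3) (6 * j+3) = 3 * absd i j.
Proof. move=> *; dtac. Qed.
Lemma DB4 (i : nat) : D (6 * i+3) 4 = 3 * i+1.
Proof. move=> *; dtac. Qed.
Lemma DB5 (i : nat) : D (6 * i+3) 5 = 3 * i+2.
Proof. move=> *; dtac. Qed.
Lemma DBb (i m : nat) : i <= m -> D (6 * i+3) (6 * m+1) = 3 * (m-i)+2.
Proof. move=> *; dtac. Qed.
Lemma DBc (i m : nat) : i <= m -> D (6 * i+3) (6 * m+2) = 3 * (m-i)+1.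
Proof. move=> *; dtac. Qed.
Lemma D4A (j : nat) : D 4 (6 * j) = 3 * j+2.
Proof. move=> *; dtac. Qed.
Lemma D4B (j : nat) : D 4 (6 * j+3) = 3 * j+1.
Proof. move=> *; dtac. Qed.
Lemma D44 : D 4 4 = 0.
Proof. move=> *; dtac. Qed.
Lemma D45 : D 4 5 = 1.
Proof. move=> *; dtac. Qed.
Lemma D4b (m : nat) : D 4 (6 * m+1) = 3 * m+3.
Proof. move=> *; dtac. Qed.
Lemma D4c (m : nat) : D 4 (6 * m+2) = 3 * m+2.
Proof. move=> *; dtac. Qed.
Lemma D5A (j : nat) : D 5 (6 * j) = 3 * j+1.
Proof. move=> *; dtac. Qed.
Lemma D5B (j : nat) : D 5 (6 * j+3) = 3 * j+2.
Proof. move=> *; dtac. Qed.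
Lemma D54 : D 5 4 = 1.
Proof. move=> *; dtac. Qed.
Lemma D55 : D 5 5 = 0.
Proof. move=> *; dtac. Qed.
Lemma D5b (m : nat) : D 5 (6 * m+1) = 3 * m+2.
Proof. move=> *; dtac. Qed.
Lemma D5c (m : nat) : D 5 (6 * m+2) = 3 * m+3.
Proof. move=> *; dtac. Qed.
Lemma DbA (j m : nat) : j <= m -> D (6 * m+1) (6 * j) = 3 * (m-j)+1.
Proof. move=> *; dtac. Qed.
Lemma DbB (j m : nat) : j <= m -> D (6 * m+1) (6 * j+3) = 3 * (m-j)+2.
Proof. move=> *; dtac. Qed.
Lemma Db4 (m : nat) : D (6 * m+1) 4 = 3 * m+3.
Proof. move=> *; dtac. Qed.
Lemma Db5 (m : nat) : D (6 * m+1) 5 = 3 * m+2.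
Proof. move=> *; dtac. Qed.
Lemma Dbb (m : nat) : D (6 * m+1) (6 * m+1) = 0.
Proof. move=> *; dtac. Qed.
Lemma Dbc (m : nat) : D (6 * m+1) (6 * m+2) = 1.
Proof. move=> *; dtac. Qed.
Lemma DcA (j m : nat) : j <= m -> D (6 * m+2) (6 * j) = 3 * (m-j)+2.
Proof. move=> *; dtac. Qed.
Lemma DcB (j m : nat) : j <= m -> D (6 * m+2) (6 * j+3) = 3 * (m-j)+1.
Proof. move=> *; dtac. Qed.
Lemma Dc4 (m : nat) : D (6 * m+2) 4 = 3 * m+2.
Proof. move=> *; dtac. Qed.
Lemma Dc5 (m : nat) : D (6 * m+2) 5 = 3 * m+3.
Proof. move=> *; dtac. Qed.
Lemma Dcb (m : nat) : D (6 * m+2) (6 * m+1) = 1.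
Proof. move=> *; dtac. Qed.
Lemma Dcc (m : nat) : D (6 * m+2) (6 * m+2) = 0.
Proof. move=> *; dtac. Qed.

Import Num.Theory.
Local Open Scope ring_scope.

Notation P := {poly int}.

Lemma sum_if1 (F : nat -> P) (w N : nat) :
  \sum_(0 <= v < N) (if v == w then F v else 0) = if (w < N)%N then F w else 0.
Proof.
elim: N => [|N IH]; first by rewrite big_geq.
rewrite big_nat_recr //= IH; case: (ltngtP w N) => h.
- by rewrite addr0 ltnS ltnW.
- by rewrite addr0 ltnS leqNgt h.
- by rewrite ?h add0r ltnSn.
Qed.

Lemma big6 (F : nat -> P) k : \sum_(0 <= u < 6 * k) F u =
  \sum_(0 <= i < k) (F (6 * i)%N + F (6 * i + 1)%N + F (6 * i + 2)%N
     + F (6 * i + 3)%N + F (6 * i + 4)%N + F (6 * i + 5)%N).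
Proof.
elim: k => [|k IH]; first by rewrite !big_geq.
rewrite [in RHS]big_nat_recr //= -IH (_ : (6 * k.+1 = (6 * k).+1.+1.+1.+1.+1.+1)%N); last lia.
rewrite !big_nat_recr //=.
by rewrite !addnS !addn0 !addrA.
Qed.



Lemma sumS m (h : nat -> P) : (1 <= m)%N ->
  \sum_(0 <= u < 6 * m.+1) (if Sdeg m.+1 u then h u else 0) =
  \sum_(0 <= i < m.+1) (h (6 * i)%N + h (6 * i + 3)%N) + h 4%N + h 5%N
    + h (6 * m + 1)%N + h (6 * m + 2)%N.
Proof.
move=> hm; rewrite big6.
rewrite (@eq_big_nat _ _ _ 0 m.+1 _ (fun i => h (6 * i)%N + h (6 * i + 3)%N
   + ((if i == m then h (6 * i + 1)%N else 0) + (if i == m then h (6 * i + 2)%N else 0))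
   + ((if i == 0%N then h (6 * i + 4)%N else 0) + (if i == 0%N then h (6 * i + 5)%N else 0)))); last first.
  move=> i /andP [_ hi].
  have e0 : Sdeg m.+1 (6 * i)%N = true by rewrite /Sdeg -(addn0 (6 * i)%N) xc6 //=; lia.
  have e1 : Sdeg m.+1 (6 * i + 1)%N = (i == m) by rewrite /Sdeg xc6 //=; lia.
  have e2 : Sdeg m.+1 (6 * i + 2)%N = (i == m) by rewrite /Sdeg xc6 //=; lia.
  have e3 : Sdeg m.+1 (6 * i + 3)%N = true by rewrite /Sdeg xc6 //=; lia.
  have e4 : Sdeg m.+1 (6 * i + 4)%N = (i == 0%N) by rewrite /Sdeg xc6 //=; lia.
  have e5 : Sdeg m.+1 (6 * i + 5)%N = (i == 0%N) by rewrite /Sdeg xc6 //=; lia.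
  rewrite e0 e1 e2 e3 e4 e5; ring.
rewrite !big_split /=.
rewrite !(sum_if1 (fun i => h (6 * i + _)%N)) ltnSn (_ : (0 < m.+1)%N) // muln0 !add0n.
ring.
Qed.

Lemma Lsym (G : nat -> nat -> P) (c : P) (F : nat -> P) n :
  (forall i, G i i = c) -> (forall i j, i != j -> G i j = F (absd i j)) ->
  \sum_(0 <= i < n) \sum_(0 <= j < n) G i j = c *+ n + (\sum_(1 <= k < n) F k *+ (n - k)%N) *+ 2.
Proof.
move=> hd ho; elim: n => [|n IH]; first by rewrite !big_geq // mulr0n mul0rn addr0.
rewrite big_nat_recr //=.
rewrite (eq_bigr (fun i => \sum_(0 <= j < n) G i j + G i n)); last by move=> i _; rewrite big_nat_recr.
rewrite big_split /= IH big_nat_recr //= hd.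
have h1 : \sum_(0 <= i < n) G i n = \sum_(1 <= k < n.+1) F k.
  rewrite [RHS]big_add1 /= big_nat_rev /=; apply: eq_big_nat => i /andP[_ hi].
  rewrite ho; last by lia. congr F; rewrite /absd; lia.
have h2 : \sum_(0 <= j < n) G n j = \sum_(1 <= k < n.+1) F k.
  rewrite [RHS]big_add1 /= big_nat_rev /=; apply: eq_big_nat => i /andP[_ hi].
  rewrite ho; last by lia. congr F; rewrite /absd; lia.
rewrite h1 h2.
rewrite (@eq_big_nat _ _ _ 1 n.+1 (fun k => F k *+ (n.+1 - k)%N) (fun k => F k *+ (n - k)%N + F k)); last first.
  move=> k /andP[_ hk]; rewrite (_ : (n.+1 - k = (n - k).+1)%N); last by lia. by rewrite mulrS addrC.
rewrite big_split /=.
case: (posnP n) => [->|hn]; first by rewrite !big_geq //; ring.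
rewrite (@big_nat_recr _ _ _ n 1 (fun k => F k *+ (n - k)%N)) //= subnn mulr0n addr0.
rewrite mulrS; ring.
Qed.

Lemma revsum (F : nat -> P) m : \sum_(0 <= i < m.+1) F (m - i)%N = \sum_(0 <= i < m.+1) F i.
Proof. rewrite big_nat_rev; apply: eq_big_nat => i /andP[_ hi]; congr F; lia. Qed.

Lemma cancel2 (p q : P) : p *+ 2 = q *+ 2 -> p = q.
Proof.
move=> h; apply/polyP => k; have := congr1 (fun r : P => r`_k) h.
rewrite !coefMn => /eqP; rewrite -subr_eq0 -mulrnBl mulrn_eq0 /= subr_eq0 => /eqP; exact.
Qed.

Definition K m u : P := \sum_(0 <= v < 6 * m.+1) (if Sdeg m.+1 v then 'X^(D u v) else 0).
Definition Arow m i : P := \sum_(0 <= j < m.+1)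
  ('X^(3 * absd i j) + 'X^(3 * absd i j + (if i == j then 3 else 1))%N).


Lemma KA (m : nat) (hm : (1 <= m)%N) i : (i <= m)%N -> K m (6 * i)%N = Arow m i + 'X^(3 * i + 2) + 'X^(3 * i + 1)
  + 'X^(3 * (m - i) + 1) + 'X^(3 * (m - i) + 2).
Proof.
move=> hi; rewrite /K sumS //=.
under eq_bigr => j _ do rewrite DAA DAB.
by rewrite DA4 DA5 DAb // DAc.
Qed.

Lemma KB (m : nat) (hm : (1 <= m)%N) i : (i <= m)%N -> K m (6 * i + 3)%N = Arow m i + 'X^(3 * i + 1) + 'X^(3 * i + 2)
  + 'X^(3 * (m - i) + 2) + 'X^(3 * (m - i) + 1).
Proof.
move=> hi; rewrite /K sumS //=.
under eq_bigr => j _ do rewrite DBA DBB addrC.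
by rewrite DB4 DB5 DBb // DBc.
Qed.

Lemma K4 (m : nat) (hm : (1 <= m)%N) : K m 4 = \sum_(0 <= j < m.+1) 'X^(3 * j + 2) + \sum_(0 <= j < m.+1) 'X^(3 * j + 1)
   + 1 + 'X + 'X^(3 * m + 3) + 'X^(3 * m + 2).
Proof.
rewrite /K sumS //=.
under eq_bigr => j _ do rewrite D4A D4B.
by rewrite big_split D44 D45 D4b D4c expr0 expr1.
Qed.

Lemma K5 (m : nat) (hm : (1 <= m)%N) : K m 5 = \sum_(0 <= j < m.+1) 'X^(3 * j + 1) + \sum_(0 <= j < m.+1) 'X^(3 * j + 2)
   + 'X + 1 + 'X^(3 * m + 2) + 'X^(3 * m + 3).
Proof.
rewrite /K sumS //=.
under eq_bigr => j _ do rewrite D5A D5B.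
by rewrite big_split D54 D55 D5b D5c expr0 expr1.
Qed.

Lemma Kb (m : nat) (hm : (1 <= m)%N) : K m (6 * m + 1)%N = \sum_(0 <= j < m.+1) 'X^(3 * j + 1) + \sum_(0 <= j < m.+1) 'X^(3 * j + 2)
   + 'X^(3 * m + 3) + 'X^(3 * m + 2) + 1 + 'X.
Proof.
rewrite /K sumS //=.
rewrite (@eq_big_nat _ _ _ 0 m.+1 _ (fun j => 'X^(3 * (m - j) + 1) + 'X^(3 * (m - j) + 2))); last first.
  by move=> j /andP[_ hj]; rewrite DbA ?DbB //; lia.
rewrite big_split /= (revsum (fun j => 'X^(3 * j + 1))) (revsum (fun j => 'X^(3 * j + 2))).
by rewrite Db4 Db5 Dbb Dbc expr0 expr1.
Qed.

Lemma Kc (m : nat) (hm : (1 <= m)%N) : K m (6 * m + 2)%N = \sum_(0 <= j < m.+1) 'X^(3 * j + 2) + \sum_(0 <= j < m.+1) 'X^(3 * j + 1)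
   + 'X^(3 * m + 2) + 'X^(3 * m + 3) + 'X + 1.
Proof.
rewrite /K sumS //=.
rewrite (@eq_big_nat _ _ _ 0 m.+1 _ (fun j => 'X^(3 * (m - j) + 2) + 'X^(3 * (m - j) + 1))); last first.
  by move=> j /andP[_ hj]; rewrite DcA ?DcB //; lia.
rewrite big_split /= (revsum (fun j => 'X^(3 * j + 1))) (revsum (fun j => 'X^(3 * j + 2))).
by rewrite Dc4 Dc5 Dcb Dcc expr0 expr1.
Qed.



Definition T m : P := \sum_(0 <= u < 6 * m.+1) \sum_(0 <= v < 6 * m.+1)
  (if (u < v)%N && Sdeg m.+1 u && Sdeg m.+1 v then 'X^(D u v) else 0).

Lemma Dsym u v : D u v = D v u.
Proof. rewrite /D /Dc /absd (eq_sym (yc v)); do ? case: ifP; lia. Qed.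

Lemma HbT m : Hb (phenylene m.+1) 2 2 = T m.
Proof.
rewrite /Hb /T big_mkord; apply: eq_bigr => u _.
rewrite big_mkord big_mkcond; apply: eq_bigr => v _.
by rewrite !deg2 orbb andbA gdistD.
Qed.

Lemma FullT m : \sum_(0 <= u < 6 * m.+1) \sum_(0 <= v < 6 * m.+1)
  (if Sdeg m.+1 u && Sdeg m.+1 v then 'X^(D u v) else 0) =
  T m *+ 2 + \sum_(0 <= u < 6 * m.+1) (if Sdeg m.+1 u then 1 else 0).
Proof.
rewrite (@eq_big_nat _ _ _ 0 (6 * m.+1) _ (fun u =>
   \sum_(0 <= v < 6 * m.+1) (if (u < v)%N && Sdeg m.+1 u && Sdeg m.+1 v then 'X^(D u v) else 0)
 + \sum_(0 <= v < 6 * m.+1) (if (v < u)%N && Sdeg m.+1 v && Sdeg m.+1 u then 'X^(D v u) else 0)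
 + \sum_(0 <= v < 6 * m.+1) (if v == u then (if Sdeg m.+1 u then 1 else 0) else 0))); last first.
  move=> u /andP[_ hu].
  rewrite -!big_split /=; apply: eq_bigr => v _.
  case: (ltngtP u v) => h /=.
  - by rewrite !addr0.
  - by rewrite add0r addr0 Dsym andbC.
  - by rewrite !add0r h andbb Duu expr0; case: (Sdeg m.+1 v).
rewrite !big_split /=.
rewrite [X in _ + X + _ = _]exchange_big /=.
rewrite (@eq_big_nat _ _ _ 0 (6 * m.+1) (fun u => \sum_(0 <= v < 6 * m.+1) (if v == u then (if Sdeg m.+1 u then 1 else 0) else 0)) (fun u => if Sdeg m.+1 u then 1 else 0)); last first.
  by move=> u /andP[_ hu]; rewrite (sum_if1 (fun _ => if Sdeg m.+1 u then 1 else 0)) hu.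
by rewrite /T mulr2n.
Qed.

Definition W m : P := \sum_(1 <= k < m.+1) ('X^(3 * k) + 'X^(3 * k + 1)) *+ (m.+1 - k).
Definition E m : P := 'X *+ 2 + 'X^3 *+ m.+1 + W m *+ 2
  + (\sum_(0 <= j < m.+1) 'X^(3 * j + 1)) *+ 4 + (\sum_(0 <= j < m.+1) 'X^(3 * j + 2)) *+ 4
  + 'X^(3 * m + 2) *+ 2 + 'X^(3 * m + 3) *+ 2.

Lemma SumArow m : \sum_(0 <= i < m.+1) Arow m i = (1 + 'X^3) *+ m.+1 + W m *+ 2.
Proof.
rewrite /Arow (@Lsym (fun i j => 'X^(3 * absd i j) + 'X^(3 * absd i j + (if i == j then 3 else 1))%N)
  (1 + 'X^3) (fun k => 'X^(3 * k) + 'X^(3 * k + 1))) //.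
- by move=> i; rewrite /absd subnn muln0 eqxx expr0 add0n.
- by move=> i j h; rewrite (negbTE h).
Qed.

Lemma Csum m : (1 <= m)%N -> \sum_(0 <= u < 6 * m.+1) (if Sdeg m.+1 u then 1 else 0) =
  (1 + 1) *+ m.+1 + 1 + 1 + 1 + 1 :> P.
Proof. by move=> hm; rewrite (@sumS m (fun _ => 1) hm) sumr_const_nat subn0. Qed.

Lemma FullE m : (1 <= m)%N -> \sum_(0 <= u < 6 * m.+1) \sum_(0 <= v < 6 * m.+1)
  (if Sdeg m.+1 u && Sdeg m.+1 v then 'X^(D u v) else 0) =
  E m *+ 2 + ((1 + 1) *+ m.+1 + 1 + 1 + 1 + 1).
Proof.
move=> hm.
rewrite (eq_bigr (fun u => if Sdeg m.+1 u then K m u else 0)); last first.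
  move=> u _; case: (Sdeg m.+1 u) => //=; by rewrite big1.
rewrite sumS //=.
rewrite (@eq_big_nat _ _ _ 0 m.+1 _ (fun i => Arow m i + 'X^(3 * i + 2) + 'X^(3 * i + 1)
  + 'X^(3 * (m - i) + 1) + 'X^(3 * (m - i) + 2) + (Arow m i + 'X^(3 * i + 1) + 'X^(3 * i + 2)
  + 'X^(3 * (m - i) + 2) + 'X^(3 * (m - i) + 1)))); last first.
  by move=> i /andP[_ hi]; rewrite KA ?KB //; lia.
rewrite K4 // K5 // Kb // Kc //.
rewrite !big_split /= SumArow (revsum (fun j => 'X^(3 * j + 1))) (revsum (fun j => 'X^(3 * j + 2))).
rewrite /E; ring.
Qed.

Lemma TE m : (1 <= m)%N -> T m = E m.
Proof.
move=> hm; apply: cancel2; apply: (@addIr _ ((1 + 1) *+ m.+1 + 1 + 1 + 1 + 1)).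
by rewrite -FullE // FullT Csum.
Qed.

Lemma RHSE m : (1 <= m)%N ->
    'X *+ 6 + 'X^3 *+ (3 * m.+1 - 2)
    + \sum_(2 <= k < m.+2) 'X^(3 * k - 2) *+ (2 * (m.+1 - k + 3))
    + \sum_(1 <= k < m.+1) 'X^(3 * k - 1) *+ 4
    + 'X^(3 * m.+1 - 1) *+ 6
    + \sum_(2 <= k < m.+2) 'X^(3 * k) *+ (2 * (m.+1 - k))
    + 'X^(3 * m.+1) *+ 2 = E m :> P.
Proof.
move=> hm.
rewrite (_ : (3 * m.+1 - 2 = 3 * m + 1)%N); last lia.
rewrite (_ : (3 * m.+1 - 1 = 3 * m + 2)%N); last lia.
rewrite (_ : (3 * m.+1 = 3 * m + 3)%N); last lia.
have f2 : \sum_(2 <= k < m.+2) 'X^(3 * k - 2) *+ (2 * (m.+1 - k + 3)) =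
   (\sum_(1 <= k < m.+1) 'X^(3 * k + 1) *+ (m.+1 - k)) *+ 2
   + (\sum_(1 <= k < m.+1) 'X^(3 * k + 1)) *+ 4 :> P.
  rewrite big_add1 /= -!sumrMnl -big_split /=; apply: eq_big_nat => k /andP[hk1 hk2].
  rewrite (_ : (3 * k.+1 - 2 = 3 * k + 1)%N); last lia.
  rewrite (_ : (2 * (m.+1 - k.+1 + 3) = (m.+1 - k) * 2 + 4)%N); last lia.
  by rewrite mulrnDr mulrnA.
have f3 : \sum_(1 <= k < m.+1) 'X^(3 * k - 1) *+ 4 =
    (\sum_(0 <= k < m) 'X^(3 * k + 2)) *+ 4 :> P.
  rewrite big_add1 /= -sumrMnl; apply: eq_big_nat => k _.
  by rewrite (_ : (3 * k.+1 - 1 = 3 * k + 2)%N) //; lia.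
have f4 : \sum_(2 <= k < m.+2) 'X^(3 * k) *+ (2 * (m.+1 - k)) =
    (\sum_(2 <= k < m.+1) 'X^(3 * k) *+ (m.+1 - k)) *+ 2 :> P.
  rewrite big_nat_recr /=; last lia.
  rewrite subnn muln0 mulr0n addr0 -sumrMnl; apply: eq_big_nat => k _.
  by rewrite (mulnC 2) mulrnA.
have e1 : \sum_(0 <= j < m.+1) 'X^(3 * j + 1) = 'X + \sum_(1 <= k < m.+1) 'X^(3 * k + 1) :> P.
  by rewrite big_ltn // muln0 add0n expr1.
have e2 : \sum_(0 <= j < m.+1) 'X^(3 * j + 2) =
   \sum_(0 <= k < m) 'X^(3 * k + 2) + 'X^(3 * m + 2) :> P.
  by rewrite big_nat_recr.
have e3 : W m = \sum_(1 <= k < m.+1) 'X^(3 * k) *+ (m.+1 - k)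
    + \sum_(1 <= k < m.+1) 'X^(3 * k + 1) *+ (m.+1 - k).
  by rewrite /W -big_split; apply: eq_bigr => k _; rewrite mulrnDl.
have e4 : \sum_(1 <= k < m.+1) 'X^(3 * k) *+ (m.+1 - k) =
    'X^3 *+ m + \sum_(2 <= k < m.+1) 'X^(3 * k) *+ (m.+1 - k) :> P.
  rewrite big_ltn; last lia.
  by rewrite muln1 subSS subn0.
rewrite f2 f3 f4 /E e1 e2 e3 e4; ring.
Qed.

Theorem theorem2p1 (n : nat) (hn : (2 <= n)%N) :
  Hb (phenylene n) 2 2 =
    'X *+ 6 + 'X^3 *+ (3 * n - 2)
    + \sum_(2 <= k < n.+1) 'X^(3 * k - 2) *+ (2 * (n - k + 3))
    + \sum_(1 <= k < n) 'X^(3 * k - 1) *+ 4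
    + 'X^(3 * n - 1) *+ 6
    + \sum_(2 <= k < n.+1) 'X^(3 * k) *+ (2 * (n - k))
    + 'X^(3 * n) *+ 2.
Proof.
have [m -> hm] : exists2 m, n = m.+1 & (1 <= m)%N by exists n.-1; lia.
by rewrite HbT TE // RHSE.
Qed.
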